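(* For every $n\ge1$, the number $r_{n+1}$ of rooted duplication trees with $n+1$ leaves equals the number $\sigma_n$ of counter arrays of length $n$.
   Context: A counter array of length $n$ is an integer array $(a_1,\dots,a_n)$ with $1\le a_i\le i$ for all $i$ and $a_{i+1}\ge a_i-1$ for all $1\le i<n$; $\sigma_n$ denotes the number of such arrays. Rooted duplication trees: start with the ordered array $(g)$ consisting of a single gene (the root). A tandem-duplication event applied to a current ordered array of genes $(g_1,\dots,g_m)$ chooses a contiguous block $g_i,\dots,g_{i+\ell-1}$, creates for each $g_j$ in the block two new genes $\mathrm{lc}(g_j)$, $\mathrm{rc}(g_j)$ (its left and right child), and replaces the block by $\mathrm{lc}(g_i),\dots,\mathrm{lc}(g_{i+\ell-1}),\mathrm{rc}(g_i),\dots,\mathrm{rc}(g_{i+\ell-1})$. A rooted duplication tree is a rooted binary tree (each internal node has a left and a right child) with the linear order on its leaves, arising from the single root by a finite sequence of such events (leaves are the genes of the final array, in that array's order). Trees are identified if isomorphic as rooted binary trees preserving left/right children and leaf order; $r_m$ counts the classes with $m$ leaves. *)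

(* Defs.v *)
From mathcomp Require Import all_boot.
Set Implicit Arguments. Unset Strict Implicit. Unset Printing Implicit Defensive.

(* A sequence a = (a_1,...,a_n) (stored 0-indexed: a_i = nth 0 a (i-1)) is a
   counter array of length n iff 1 <= a_i <= i and a_{i+1} >= a_i - 1. *)
Definition counter_array (n : nat) (a : seq nat) : bool :=
  [&& size a == n,
      all (fun i => (0 < nth 0 a i) && (nth 0 a i <= i.+1)) (iota 0 n)
    & all (fun i => (nth 0 a i).-1 <= nth 0 a i.+1) (iota 0 n.-1)].

(* sigma n = number of counter arrays of length n; every entry lies in
   {0..n}, so they are enumerated among n-tuples over 'I_(n.+1). *)
Definition sigma (n : nat) : nat :=
  #|[set t : n.-tuple 'I_n.+1 | counter_array n (map (@nat_of_ord _) t)]|.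

(* A gene (node of the rooted binary tree) is encoded by its path from the
   root: false = left child (lc), true = right child (rc).  The root is [::]. *)
Definition gene := seq bool.
Definition lc (g : gene) : gene := rcons g false.
Definition rc (g : gene) : gene := rcons g true.

Definition dup_event (a b : seq gene) : Prop :=
  exists i l, 0 < l /\ i + l <= size a /\
    let blk := take l (drop i a) in
    b = take i a ++ map lc blk ++ map rc blk ++ drop (i + l) a.

Inductive reachable : seq gene -> Prop :=
| reach_root : reachable [:: [::]]
| reach_step a b : reachable a -> dup_event a b -> reachable b.

(* A rooted duplication tree up to isomorphism (preserving left/right
   children and leaf order) is exactly determined by its final leaf array,
   written as root paths: the tree is the prefix closure of the leaves and
   the leaf order is the order of the array.  Hence the classes with m
   leaves are in bijection with the reachable arrays of size m. *)
Definition dup_tree_class (m : nat) (a : seq gene) : Prop :=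
  reachable a /\ size a = m.

(* Main.v *)
Require Import Defs.
From mathcomp Require Import all_boot.
From Stdlib Require Import Classical.
From mathcomp Require Import zify.
Set Implicit Arguments. Unset Strict Implicit. Unset Printing Implicit Defensive.

Ltac slia := try unfold gene in *; simpl in *; lia.

Definition E (x G y : seq (seq bool)) : seq (seq bool) := x ++ map lc G ++ map rc G ++ y.
Definition evAt (b : seq (seq bool)) (p : nat) : Prop :=
  exists x G y, [/\ size x = p, G != [::] & b = E x G y].
Definition pfree (b : seq (seq bool)) : Prop :=
  forall a c s, a \in b -> c \in b -> c = a ++ s -> s = [::].
Definition wf b := uniq b /\ pfree b.

Lemma lc_inj : injective lc. Proof. exact: rcons_injl. Qed.
Lemma rc_inj : injective rc. Proof. exact: rcons_injl. Qed.
Lemma lc_rc g h : lc g <> rc h.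
Proof. by move=> /rcons_inj []. Qed.

Lemma size_E x G y : size (E x G y) = size x + 2 * size G + size y.
Proof. rewrite /E !size_cat !size_map; slia. Qed.

Ltac sz := repeat (progress (simpl; try rewrite size_cat; try rewrite size_map; try rewrite size_rcons; try rewrite size_E)).

Lemma app_split (T : Type) (s1 s2 t1 t2 : seq T) :
  size s1 <= size s2 -> s1 ++ t1 = s2 ++ t2 -> exists z, s2 = s1 ++ z /\ t1 = z ++ t2.
Proof.
elim: s1 s2 => [|a s1 IH] [|c s2] //= le.
- by move=> ->; exists [::].
- by move=> e; exists (c :: s2).
- case=> -> /(IH _ le) [z [-> ->]]; by exists z.
Qed.

Lemma catI (T : Type) (s t1 t2 : seq T) : s ++ t1 = s ++ t2 -> t1 = t2.
Proof. by elim: s => //= a s IH [] /IH. Qed.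

Lemma dupE x G y : G != [::] -> dup_event (x ++ G ++ y) (E x G y).
Proof.
move=> nG; exists (size x), (size G); split; [|split].
- by case: G nG.
- by rewrite !size_cat; slia.
- rewrite /= drop_size_cat // take_size_cat // take_size_cat //.
  by rewrite (catA x G y) drop_size_cat ?size_cat.
Qed.

Lemma dupP a b : dup_event a b -> exists x G y : seq (seq bool), [/\ G != [::], a = x ++ G ++ y & b = E x G y].
Proof.
case=> i [l [l0 [le ->]]]; exists (take i a), (take l (drop i a)), (drop (i + l) a); split.
- by rewrite -size_eq0 -lt0n size_take size_drop; case: (ltnP l (size a - i)) => h; slia.
- by rewrite addnC -drop_drop !cat_take_drop.
- by [].
Qed.

Lemma reach_size a : reachable a -> 0 < size a.
Proof. elim=> // a' b _ IH /dupP [x [G [y [_ Ea ->]]]]; move: IH; rewrite Ea size_E !size_cat; slia. Qed.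

Lemma evAt_size b p : evAt b p -> p.+2 <= size b.
Proof. case=> x [G [y [<- nG ->]]]; rewrite size_E; case: G nG => //= g G _; slia. Qed.

Lemma memE x G y z : z \in E x G y -> z \in x ++ y \/ exists2 g, g \in G & exists b, z = rcons g b.
Proof.
rewrite /E !mem_cat => /or4P [H|/mapP[g gG ->]|/mapP[g gG ->]|H].
- by left; rewrite H.
- by right; exists g => //; exists false.
- by right; exists g => //; exists true.
- by left; rewrite H orbT.
Qed.

Lemma wf_E x G y : wf (x ++ G ++ y) -> wf (E x G y).
Proof.
case=> U P.
have U' := U; rewrite !cat_uniq !has_cat !negb_or in U'.
move: U' => /and3P [ux /andP [nxG nxy] /and3P [uG nGy uy]].
have oldC z : z \in x ++ y -> z \in x ++ G ++ y.
  by rewrite !mem_cat => /orP [->|->]; rewrite ?orbT.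
have GC z : z \in G -> z \in x ++ G ++ y by move=> h; rewrite !mem_cat h orbT.
have disj z : z \in G -> z \in x ++ y -> False.
  move=> zG; rewrite mem_cat => /orP [zx|zy].
  - by move/hasPn: nxG => /(_ z zG); rewrite zx.
  - by move/hasPn: nGy => /(_ z zy); rewrite zG.
have nold g b : g \in G -> rcons g b \in x ++ y -> False.
  move=> gG /oldC H; have := P g (rcons g b) [:: b] (GC _ gG) H.
  by rewrite cats1 => /(_ erefl).
split.
- have h1 : ~~ has (mem x) (map lc G).
    by apply/hasPn => z /mapP [g gG ->]; apply/negP => H; apply: (nold g false gG); rewrite mem_cat; apply/orP; left; exact: H.
  have h2 : ~~ has (mem x) (map rc G).
    by apply/hasPn => z /mapP [g gG ->]; apply/negP => H; apply: (nold g true gG); rewrite mem_cat; apply/orP; left; exact: H.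
  have h3 : ~~ has (mem (map lc G)) (map rc G).
    by apply/hasPn => z /mapP [g gG ->]; apply/negP => /mapP [g' _ /esym/lc_rc].
  have h4 : ~~ has (mem (map lc G)) y.
    by apply/hasPn => z zy; apply/negP => /mapP [g gG E1]; apply: (nold g false gG); rewrite mem_cat; apply/orP; right; rewrite -[rcons g false]/(lc g) -E1.
  have h5 : ~~ has (mem (map rc G)) y.
    by apply/hasPn => z zy; apply/negP => /mapP [g gG E1]; apply: (nold g true gG); rewrite mem_cat; apply/orP; right; rewrite -[rcons g true]/(rc g) -E1.
  by rewrite /E !cat_uniq !has_cat !negb_or ux uy (map_inj_uniq lc_inj) uG (map_inj_uniq rc_inj) uG nxy h1 h2 h3 h4 h5.
- move=> a c s /memE Ha /memE Hc.
  case: Ha => [ao|[g gG [b ->]]] Ec.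
  + case: Hc => [co|[g' gG' [b' Ec']]]; first exact: P (oldC _ ao) (oldC _ co) Ec.
    case/lastP: s Ec => [//|s' z]; rewrite Ec' -rcons_cat => /rcons_inj [Eg _].
    have := P a g' s' (oldC _ ao) (GC _ gG') Eg; move=> es; move: Eg; rewrite es cats0 => Eg.
    by case: (disj g' gG'); rewrite Eg.
  + rewrite cat_rcons in Ec.
    case: Hc => [co|[g' gG' [b' Ec']]]; first by have := P g c _ (GC _ gG) (oldC _ co) Ec.
    case/lastP: s Ec => [//|s' z]; rewrite Ec' => Ec.
    have : rcons g' b' = rcons (g ++ b :: s') z by rewrite Ec rcons_cat rcons_cons.
    move=> /rcons_inj [Eg _].
    by have := P g g' _ (GC _ gG) (GC _ gG') Eg.
Qed.

Lemma reach_wf b : reachable b -> wf b.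
Proof.
elim=> [|a b' _ IH /dupP [x [G [y [_ Ea ->]]]]].
- split => // a c s; rewrite !inE => /eqP -> /eqP ->; by case: s.
- by apply: wf_E; rewrite -Ea.
Qed.

Lemma nthE_l x G y t : t < size G -> nth [::] (E x G y) (size x + t) = lc (nth [::] G t).
Proof.
move=> tG; rewrite /E nth_cat ltnNge leq_addr /= addKn nth_cat size_map tG.
by rewrite (nth_map [::]).
Qed.

Lemma nthE_r x G y t : t < size G -> nth [::] (E x G y) (size x + size G + t) = rc (nth [::] G t).
Proof.
move=> tG; rewrite /E nth_cat ltnNge -addnA leq_addr /= addKn nth_cat size_map ltnNge leq_addr /=.
by rewrite addKn nth_cat size_map tG (nth_map [::]).
Qed.

Lemma Olt (b x G y u B w : seq (seq bool)) : uniq b -> b = E x G y -> b = E u B w -> G != [::] -> B != [::] ->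
  size x < size u -> size u < size x + 2 * size G -> False.
Proof.
move=> ub Eb1 Eb2 nG nB lt1 lt2.
have sb1 := congr1 size Eb1; have sb2 := congr1 size Eb2; rewrite size_E in sb1; rewrite size_E in sb2.
have lG : 0 < size G by rewrite lt0n size_eq0.
have lB : 0 < size B by rewrite lt0n size_eq0.
have bQ : nth [::] b (size u) = lc (nth [::] B 0).
  by rewrite Eb2 -[size u]addn0 nthE_l.
have lt3 : size u < size x + size G.
  case: (ltnP (size u) (size x + size G)) => // h.
  have : nth [::] b (size u) = rc (nth [::] G (size u - (size x + size G))).
    by rewrite Eb1 -{1}(subnKC h) nthE_r //; slia.
  by rewrite bQ => /lc_rc.
have bQ' : nth [::] b (size u) = lc (nth [::] G (size u - size x)).
  by rewrite Eb1 -{1}(subnKC (ltnW lt1)) nthE_l //; slia.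
have eg : nth [::] G (size u - size x) = nth [::] B 0 by apply: lc_inj; rewrite -bQ' bQ.
have r1 : nth [::] b (size u + size G) = rc (nth [::] B 0).
  have -> : size u + size G = size x + size G + (size u - size x) by slia.
  by rewrite Eb1 nthE_r ?eg //; slia.
have r2 : nth [::] b (size u + size B) = rc (nth [::] B 0) by rewrite Eb2 -[_ + size B]addn0 nthE_r.
have eL : size G = size B.
  have i1 := index_uniq [::] (_ : size u + size G < size b) ub.
  have i2 := index_uniq [::] (_ : size u + size B < size b) ub.
  rewrite r1 in i1; rewrite r2 in i2.
  have : size u + size G = size u + size B by rewrite -i1 ?i2 //; slia.
  by move/eqP; rewrite eqn_add2l => /eqP.
have : nth [::] b (size x + size G) = rc (nth [::] G 0) by rewrite Eb1 -[_ + size G]addn0 nthE_r.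
have -> : size x + size G = size u + (size x + size G - size u) by slia.
by rewrite Eb2 nthE_l; [move/lc_rc | slia].
Qed.

Lemma Oeq (b x G y u B w : seq (seq bool)) : uniq b -> b = E x G y -> b = E u B w -> G != [::] -> B != [::] ->
  size x = size u -> size G = size B.
Proof.
move=> ub Eb1 Eb2 nG nB e.
have sb1 := congr1 size Eb1; have sb2 := congr1 size Eb2; rewrite size_E in sb1; rewrite size_E in sb2.
have lG : 0 < size G by rewrite lt0n size_eq0.
have lB : 0 < size B by rewrite lt0n size_eq0.
have : lc (nth [::] G 0) = lc (nth [::] B 0).
  by rewrite -(@nthE_l x G y 0 lG) -(@nthE_l u B w 0 lB) -Eb1 -Eb2 e.
move/lc_inj => eg.
have r1 : nth [::] b (size x + size G) = rc (nth [::] B 0) by rewrite Eb1 -[_ + size G]addn0 nthE_r // eg.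
have r2 : nth [::] b (size x + size B) = rc (nth [::] B 0) by rewrite Eb2 e -[_ + size B]addn0 nthE_r.
have i1 := index_uniq [::] (_ : size x + size G < size b) ub.
have i2 := index_uniq [::] (_ : size x + size B < size b) ub.
rewrite r1 in i1; rewrite r2 in i2.
have : size x + size G = size x + size B by rewrite -i1 ?i2 //; slia.
by move/eqP; rewrite eqn_add2l => /eqP.
Qed.

Lemma overlap (b x G y u B w : seq (seq bool)) : uniq b -> b = E x G y -> b = E u B w -> G != [::] -> B != [::] ->
  [\/ [/\ x = u, G = B & y = w],
      exists z : seq (seq bool), u = x ++ map lc G ++ map rc G ++ z
    | exists z : seq (seq bool), x = u ++ map lc B ++ map rc B ++ z].
Proof.
move=> ub Eb1 Eb2 nG nB.
case: (leqP (size x + 2 * size G) (size u)) => h1.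
  have e : (x ++ map lc G ++ map rc G) ++ y = u ++ (map lc B ++ map rc B ++ w).
    by rewrite -!catA -/(E x G y) -/(E u B w) -Eb1 -Eb2.
  have [|z [-> _]] := app_split _ e; first by rewrite !size_cat !size_map; slia.
  by apply: Or32; exists z; rewrite -!catA.
case: (leqP (size u + 2 * size B) (size x)) => h2.
  have e : (u ++ map lc B ++ map rc B) ++ w = x ++ (map lc G ++ map rc G ++ y).
    by rewrite -!catA -/(E x G y) -/(E u B w) -Eb1 -Eb2.
  have [|z [-> _]] := app_split _ e; first by rewrite !size_cat !size_map; slia.
  by apply: Or33; exists z; rewrite -!catA.
case: (ltngtP (size x) (size u)) => h3.
- by case: (Olt ub Eb1 Eb2 nG nB h3); slia.
- by case: (Olt ub Eb2 Eb1 nB nG h3); slia.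
- have eL := Oeq ub Eb1 Eb2 nG nB h3.
  apply: Or31.
  have : x ++ (map lc G ++ map rc G ++ y) == u ++ (map lc B ++ map rc B ++ w).
    by rewrite -/(E x G y) -/(E u B w) -Eb1 -Eb2.
  rewrite eqseq_cat // => /andP [/eqP -> ].
  rewrite eqseq_cat ?size_map // => /andP [/eqP /(inj_map lc_inj) eGB].
  by rewrite eGB => /eqP /catI ->.
Qed.

Lemma undo (b : seq (seq bool)) : reachable b -> forall x G y : seq (seq bool), G != [::] -> b = E x G y -> reachable (x ++ G ++ y).
Proof.
elim=> [|a b' Ra IH D] x G y nG Eb.
- have := congr1 size Eb; rewrite size_E.
  have : 0 < size G by rewrite lt0n size_eq0.
  move=> h /= e; slia.
- have Rb := reach_step Ra D; case: (reach_wf Rb) => ub _.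
  case/dupP: D => u [B [w [nB Ea Eb']]].
  case: (overlap ub Eb Eb' nG nB) => [[ex eG ey]|[z Eu]|[z Ex]].
  + by rewrite ex eG ey -Ea.
  + have ey : y = z ++ map lc B ++ map rc B ++ w.
      by move: Eb; rewrite Eb' /E Eu -!catA => /catI/catI/catI.
    have Ra' : reachable (x ++ G ++ z ++ B ++ w).
      apply: IH => //; by rewrite Ea Eu /E -!catA.
    have -> : x ++ G ++ y = E (x ++ G ++ z) B w by rewrite ey /E -!catA.
    apply: (@reach_step ((x ++ G ++ z) ++ B ++ w)); [by rewrite -!catA | exact: dupE].
  + have ew : w = z ++ map lc G ++ map rc G ++ y.
      by move: Eb'; rewrite Eb /E Ex -!catA => /catI/catI/catI.
    have Ra' : reachable (u ++ B ++ z ++ G ++ y).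
      have := IH (u ++ B ++ z) G y nG; rewrite -!catA; apply; by rewrite Ea ew /E -!catA.
    have -> : x ++ G ++ y = E u B (z ++ G ++ y) by rewrite Ex /E -!catA.
    exact: reach_step Ra' (dupE _ _ nB).
Qed.

Definition isStat (b : seq (seq bool)) (j : nat) : Prop :=
  (forall p, evAt b p -> p < j) /\ (0 < j -> evAt b j.-1).

Lemma stat_uniq b j1 j2 : isStat b j1 -> isStat b j2 -> j1 = j2.
Proof.
case=> [h1 e1] [h2 e2]; apply/eqP; rewrite eqn_leq; apply/andP; split.
- case: (posnP j1) => [->//|p1]; have := h2 _ (e1 p1); slia.
- case: (posnP j2) => [->//|p2]; have := h1 _ (e2 p2); slia.
Qed.

Lemma ex_max (P : nat -> Prop) N : (forall p, P p -> p < N) ->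
  exists j, (forall p, P p -> p < j) /\ (0 < j -> P j.-1).
Proof.
elim: N => [|N IH] H; first by exists 0; split => // p /H.
case: (classic (P N)) => PN; first by exists N.+1.
apply: IH => p Pp; have := H p Pp; rewrite ltnS leq_eqVlt => /orP [/eqP e|//].
by rewrite e in Pp.
Qed.

Lemma stat_ex b : exists j, isStat b j.
Proof. by apply: (ex_max (N := size b)) => p /evAt_size; slia. Qed.

Definition par (g : seq bool) : seq bool := take (size g).-1 g.
Lemma par_lc g : par (lc g) = g.
Proof. by rewrite /par /lc size_rcons /= -cats1 take_size_cat. Qed.

Definition dec (b : seq (seq bool)) (j k : nat) : seq (seq bool) :=
  let h := nth [::] b k.-1 in
  let L := if k < j then index (rc (par (nth [::] b k))) b - k else 0 in
  take k.-1 b ++ lc h :: take L (drop k b) ++ rc h :: drop (k + L) b.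

Lemma dec_unit (b x y : seq (seq bool)) h j k : b = x ++ h :: y -> size x = k.-1 -> 0 < k -> j <= k ->
  dec b j k = x ++ lc h :: rc h :: y.
Proof.
move=> Eb sx k0 jk; rewrite /dec ltnNge jk /= addn0 take0 /=.
have ek : k = size x + 1 by slia.
rewrite Eb take_size_cat // nth_cat sx ltnn subnn /=.
have -> : x ++ h :: y = (x ++ [:: h]) ++ y by rewrite -catA.
by rewrite drop_size_cat // size_cat /=; slia.
Qed.

Lemma dec_ext (b x G y : seq (seq bool)) h j k : uniq b -> b = x ++ h :: (map lc G ++ map rc G ++ y) ->
  size x = k.-1 -> 0 < k -> k < j -> G != [::] -> dec b j k = E x (h :: G) y.
Proof.
move=> ub Eb sx k0 kj nG.
have lG : 0 < size G by rewrite lt0n size_eq0.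
have Eb2 : b = E (x ++ [:: h]) G y by rewrite Eb /E -catA.
have sx2 : size (x ++ [:: h]) = k by rewrite size_cat sx /=; slia.
have nk : nth [::] b k = lc (nth [::] G 0) by rewrite Eb2 -sx2 -[size _]addn0 nthE_l.
have nkL : nth [::] b (k + size G) = rc (nth [::] G 0) by rewrite Eb2 -sx2 -[_ + size G]addn0 nthE_r.
have sb : size b = k + 2 * size G + size y by rewrite Eb2 size_E sx2.
have iL : index (rc (nth [::] G 0)) b = k + size G by rewrite -nkL index_uniq //; slia.
rewrite /dec kj nk par_lc iL.
have -> : k + size G - k = size G by slia.
have t1 : take k.-1 b = x by rewrite Eb -sx take_size_cat.
have t2 : nth [::] b k.-1 = h by rewrite Eb nth_cat sx ltnn subnn.
have dk : drop k b = map lc G ++ map rc G ++ y.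
  by rewrite (_ : b = (x ++ [:: h]) ++ (map lc G ++ map rc G ++ y)) ?drop_size_cat // Eb -catA.
have t3 : take (size G) (drop k b) = map lc G by rewrite dk take_size_cat ?size_map.
have t4 : drop (k + size G) b = map rc G ++ y by rewrite addnC -drop_drop dk drop_size_cat ?size_map.
by rewrite t1 t2 t3 t4 /E.
Qed.

Lemma reach_ev (b : seq (seq bool)) : reachable b -> 1 < size b -> exists p, evAt b p.
Proof.
case=> [//|a b' _ /dupP [x [G [y [nG _ ->]]]]] _.
by exists (size x), x, G, y.
Qed.

Lemma reach1 (b : seq (seq bool)) : reachable b -> size b = 1 -> b = [:: [::]].
Proof.
case=> [//|a b' Ra /dupP [x [G [y [nG Ea ->]]]]].
have := reach_size Ra; rewrite Ea size_E !size_cat.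
have : 0 < size G by rewrite lt0n size_eq0.
move=> h1 h2 h3; exfalso; slia.
Qed.

Definition rng j M := iota (maxn 1 j.-1) (M.+1 - maxn 1 j.-1).
Lemma mem_rng j M k : (k \in rng j M) = (maxn 1 j.-1 <= k <= M).
Proof.
rewrite /rng mem_iota; apply/idP/idP => /andP [h1 h2]; apply/andP; split => //; slia.
Qed.

Lemma D1 (b' : seq (seq bool)) j' m k : reachable b' -> size b' = m.+1 -> isStat b' j' -> k \in rng j' m.+1 ->
  [/\ reachable (dec b' j' k), size (dec b' j' k) = m.+2, isStat (dec b' j' k) k &
    exists x h G y, [/\ size x = k.-1, dec b' j' k = E x (h :: G) y
                     & b' = x ++ h :: (map lc G ++ map rc G ++ y)]].
Proof.
move=> Rb sb [st1 st2]; rewrite mem_rng => /andP [lo hi].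
have k0 : 0 < k by slia.
have ub := (reach_wf Rb).1.
case: (ltnP k j') => kj.
- have j0 : 0 < j' by slia.
  have [x1 [G [y [sx1 nG Eb]]]] := st2 j0.
  case/lastP: x1 sx1 Eb => [|x h] sx1 Eb; first by exfalso; rewrite /= in sx1; slia.
  have Eb' : b' = x ++ h :: (map lc G ++ map rc G ++ y) by rewrite Eb /E -cats1 -catA.
  have sx : size x = k.-1 by rewrite size_rcons in sx1; slia.
  rewrite (dec_ext ub Eb' sx k0 kj nG).
  have Rb2 : reachable (E x (h :: G) y).
    have R0 := undo Rb nG Eb.
    apply: (@reach_step (x ++ (h :: G) ++ y)); last exact: dupE.
    by move: R0; rewrite -cats1 -!catA.
  have ub2 := (reach_wf Rb2).1.
  have sG : 0 < size G by rewrite lt0n size_eq0.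
  split => //.
  + move: sb; rewrite Eb'; sz; slia.
  + split; last by move=> _; exists x, (h :: G), y.
    move=> p [x2 [G2 [y2 [sx2 nG2 Eb2]]]].
    case: (overlap ub2 (erefl _) Eb2 _ nG2) => // [[ex _ _]|[z Ex2]|[z Ex]].
    * by rewrite -sx2 -ex sx; slia.
    * have ey : y = z ++ map lc G2 ++ map rc G2 ++ y2.
        by move: Eb2; rewrite Ex2 /E -!catA /= => /catI [] /catI [] /catI.
      have H : evAt b' (size (rcons x h ++ map lc G ++ map rc G ++ z)).
        exists (rcons x h ++ map lc G ++ map rc G ++ z), G2, y2; split => //.
        by rewrite Eb /E ey -!catA.
      have := st1 _ H; sz; slia.
    * by rewrite -sx2; move: (congr1 size Ex); rewrite !size_cat sx; slia.
  + by exists x, h, G, y.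
- have lt : k.-1 < size b' by slia.
  have Eb' : b' = take k.-1 b' ++ nth [::] b' k.-1 :: drop k b'.
    by rewrite -{3}(prednK k0) -drop_nth // cat_take_drop.
  move: Eb'; set x := take k.-1 b'; set h := nth [::] b' k.-1; set y := drop k b' => Eb'.
  have sx : size x = k.-1 by rewrite size_take lt.
  rewrite (dec_unit Eb' sx k0 kj).
  have EE : x ++ lc h :: rc h :: y = E x [:: h] y by [].
  have Rb2 : reachable (E x [:: h] y).
    by apply: (@reach_step (x ++ [:: h] ++ y)); [rewrite -Eb' | exact: dupE].
  rewrite EE.
  have ub2 := (reach_wf Rb2).1.
  split => //.
  + by move: sb; rewrite Eb' size_E !size_cat /=; slia.
  + split; last by move=> _; exists x, [:: h], y.
    move=> p [x2 [G2 [y2 [sx2 nG2 Eb2]]]].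
    case: (overlap ub2 (erefl _) Eb2 _ nG2) => // [[ex _ _]|[z Ex2]|[z Ex]].
    * by rewrite -sx2 -ex sx; slia.
    * have ey : y = z ++ map lc G2 ++ map rc G2 ++ y2.
        by move: Eb2; rewrite Ex2 /E -!catA /= => /catI [].
      have H : evAt b' (size (x ++ h :: z)).
        exists (x ++ h :: z), G2, y2; split => //.
        by rewrite Eb' /E ey -!catA.
      have := st1 _ H; sz; slia.
    * by rewrite -sx2; move: (congr1 size Ex); rewrite !size_cat sx; slia.
  + by exists x, h, [::], y.
Qed.

Lemma R1 (b : seq (seq bool)) m k : reachable b -> size b = m.+2 -> isStat b k ->
  exists b' j', [/\ reachable b', size b' = m.+1, isStat b' j', k \in rng j' m.+1 & dec b' j' k = b].
Proof.
move=> Rb sb [st1 st2].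
have k0 : 0 < k.
  have [p ep] : exists p, evAt b p by apply: (reach_ev Rb); rewrite sb.
  by have := st1 _ ep; slia.
have [x [G0 [y [sx nG Eb]]]] := st2 k0.
case: G0 nG Eb => [//|h G] nG Eb.
have Ra := undo Rb nG Eb.
have ub := (reach_wf Rb).1.
set b' := x ++ h :: (map lc G ++ map rc G ++ y).
have sb' : size b' = m.+1 by move: sb; rewrite Eb /b'; sz; slia.
case: (eqVneq G [::]) => [eG|nG'].
- have Eb' : b' = x ++ h :: y by rewrite /b' eG.
  have Rb' : reachable b' by rewrite Eb'; move: Ra; rewrite eG.
  have [j' sj'] := stat_ex b'.
  have jk : j' <= k.
    case: (leqP j' k) => // kj; exfalso.
    case: sj' => _ H; have [x3 [G3 [y3 [sx3 nG3 Eb3]]]] : evAt b' j'.-1 by apply: H; slia.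
    have e : (x ++ [:: h]) ++ y = x3 ++ (map lc G3 ++ map rc G3 ++ y3) by rewrite -catA -Eb' Eb3.
    have [|z [Ex3 ey]] := app_split _ e; first by rewrite size_cat sx sx3 /=; slia.
    have H2 : evAt b (size (x ++ [:: lc h; rc h] ++ z)).
      exists (x ++ [:: lc h; rc h] ++ z), G3, y3; split => //.
      by rewrite Eb eG ey /E -!catA.
    by have := st1 _ H2; sz; slia.
  exists b', j'; split => //.
  + by rewrite mem_rng; apply/andP; split; [slia | move: sb; rewrite Eb; sz; slia].
  + by rewrite (dec_unit Eb' sx k0 jk) Eb eG.
- have Eb'E : b' = E (x ++ [:: h]) G y by rewrite /b' /E -catA.
  have Rb' : reachable b'.
    rewrite Eb'E; apply: (@reach_step ((x ++ [:: h]) ++ G ++ y)); last exact: dupE.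
    by move: Ra; rewrite -catA.
  have ub' := (reach_wf Rb').1.
  have sj : isStat b' k.+1.
    split; last first.
      move=> _; exists (x ++ [:: h]), G, y; split => //; rewrite size_cat sx /=; slia.
    move=> p [x3 [G3 [y3 [sx3 nG3 Eb3]]]].
    case: (overlap ub' Eb'E Eb3 nG' nG3) => [[ex _ _]|[z Ex3]|[z Ex]].
    + by rewrite -sx3 -ex size_cat sx /=; slia.
    + have ey : y = z ++ map lc G3 ++ map rc G3 ++ y3.
        by move: Eb3; rewrite Eb'E Ex3 /E -!catA => /catI/catI/catI/catI.
      have H2 : evAt b (size (x ++ map lc (h :: G) ++ map rc (h :: G) ++ z)).
        exists (x ++ map lc (h :: G) ++ map rc (h :: G) ++ z), G3, y3; split => //.
        by rewrite Eb ey /E -!catA.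
      by have := st1 _ H2; sz; slia.
    + by rewrite -sx3; move: (congr1 size Ex); sz; slia.
  have [j' sj'] := stat_ex b'.
  have ej : j' = k.+1 := stat_uniq sj' sj.
  exists b', j'; split => //; rewrite ej.
  + by rewrite mem_rng; apply/andP; split; [slia | move: sb; rewrite Eb; sz; slia].
  + by rewrite (dec_ext ub' (erefl b') sx k0 (ltnSn k) nG') Eb.
Qed.

Lemma uniq_allpairs (S R : eqType) (f : S -> nat -> R) (s : seq S) (t : S -> seq nat) :
  uniq s -> (forall x, uniq (t x)) ->
  (forall x1 x2 k1 k2, x1 \in s -> x2 \in s -> k1 \in t x1 -> k2 \in t x2 ->
      f x1 k1 = f x2 k2 -> x1 = x2 /\ k1 = k2) ->
  uniq [seq f x k | x <- s, k <- t x].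
Proof.
elim: s => //= x s IH /andP [xs us] ut inj.
have hb y : y \in s -> y \in x :: s by move=> h; rewrite inE h orbT.
rewrite cat_uniq; apply/and3P; split.
- rewrite map_inj_in_uniq // => k1 k2 h1 h2 e.
  by case: (inj x x k1 k2 (mem_head _ _) (mem_head _ _) h1 h2 e).
- apply/hasPn => z /allpairsPdep [x2 [k2 [h2 hk2 ->]]]; apply/negP => /mapP [k1 hk1 e].
  have [ex _] := inj x x2 k1 k2 (mem_head _ _) (hb _ h2) hk1 hk2 (esym e).
  by move: xs; rewrite ex h2.
- apply: IH => // x1 x2 k1 k2 h1 h2; apply: inj; exact: hb.
Qed.

Fixpoint T m : seq (seq (seq bool) * nat) :=
  if m is m'.+1 then [seq (dec x.1 x.2 k, k) | x <- T m', k <- rng x.2 m]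
  else [:: ([:: [::]], 0)].

Lemma T_spec m : uniq (T m) /\
  forall b j, (b, j) \in T m <-> [/\ reachable b, size b = m.+1 & isStat b j].
Proof.
elim: m => [|m [uT IH]].
  split => // b j; rewrite inE; split.
  - move=> /eqP [-> ->]; split => //; first exact: reach_root.
    by split => // p /evAt_size.
  - case=> Rb sb [_ st2]; rewrite (reach1 Rb sb).
    case: (posnP j) => [->//|j0]; have := evAt_size (st2 j0); by rewrite sb ltnS ltn0.
split.
- apply: uniq_allpairs => //; first by move=> x; exact: iota_uniq.
  move=> [b1 j1] [b2 j2] k1 k2 /IH [R1 s1 t1] /IH [R2 s2 t2] /= h1 h2 [eb ek].
  subst k2.
  have [Rd _ _ [xa [ha [Ga [ya [sxa Ea Eb1]]]]]] := D1 R1 s1 t1 h1.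
  have [_ _ _ [xb [hb [Gb [yb [sxb Eb Eb2]]]]]] := D1 R2 s2 t2 h2.
  have ub := (reach_wf Rd).1.
  rewrite eb in Ea; rewrite eb in ub.
  case: (overlap ub Ea Eb _ _) => // [[ex eG ey]|[z Ez]|[z Ez]].
  + case: eG => eh eG'.
    have eb' : b1 = b2 by rewrite Eb1 Eb2 ex eh eG' ey.
    rewrite -eb' in t2; by rewrite (stat_uniq t1 t2) eb'.
  + by exfalso; move: (congr1 size Ez); sz; slia.
  + by exfalso; move: (congr1 size Ez); sz; slia.
- move=> b j; split.
  + move=> /allpairsPdep [[b' j'] [k [/IH [R1 s1 t1] hk [-> ->]]]] /=.
    by have [] := D1 R1 s1 t1 hk.
  + case=> Rb sb st.
    have [b' [j' [Rb' sb' st' hk ed]]] := R1 Rb sb st.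
    apply/allpairsPdep; exists (b', j'), j; split => //; first by apply/IH.
    by rewrite ed.
Qed.

Fixpoint C m : seq (seq nat) :=
  if m is m'.+1 then [seq rcons a k | a <- C m', k <- rng (last 0 a) m] else [:: [::]].

Lemma iotaSr m : iota 0 m.+1 = iota 0 m ++ [:: m].
Proof. by rewrite -addn1 iotaD. Qed.

Lemma ca_rcons m a k : counter_array m.+1 (rcons a k) =
  [&& counter_array m a, 0 < k, k <= m.+1 & (last 0 a).-1 <= k].
Proof.
rewrite /counter_array size_rcons eqSS.
case: (eqVneq (size a) m) => [sa|]; last by [].
rewrite iotaSr all_cat /= nth_rcons sa ltnn eqxx andbT.
have e1 : all (fun i => (0 < nth 0 (rcons a k) i) && (nth 0 (rcons a k) i <= i.+1)) (iota 0 m)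
        = all (fun i => (0 < nth 0 a i) && (nth 0 a i <= i.+1)) (iota 0 m).
  by apply: eq_in_all => i; rewrite mem_iota /= => hi; rewrite nth_rcons sa hi.
rewrite e1.
case: m sa e1 => [|m] sa _.
  by case: a sa => //= _; rewrite andbT leq0n andbT.
set A := all (fun i => 0 < nth 0 a i <= i.+1) _.
rewrite iotaSr all_cat /= nth_rcons sa ltnSn nth_rcons sa ltnn eqxx andbT.
have e2 : all (fun i => (nth 0 (rcons a k) i).-1 <= nth 0 (rcons a k) i.+1) (iota 0 m)
        = all (fun i => (nth 0 a i).-1 <= nth 0 a i.+1) (iota 0 m).
  apply: eq_in_all => i; rewrite mem_iota /= => hi; rewrite !nth_rcons sa.
  have h1 : i < m.+1 by slia.
  have h2 : i.+1 < m.+1 by slia.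
  by rewrite h1 h2.
rewrite e2.
have -> : last 0 a = nth 0 a m by rewrite -nth_last sa.
by rewrite -!andbA; do !bool_congr.
Qed.

Lemma C_spec m : uniq (C m) /\ forall a, (a \in C m) = counter_array m a.
Proof.
elim: m => [|m [uC IH]].
  split => // a; rewrite inE /counter_array /=.
  by case: a => [|x a] //=; rewrite andbT.
split.
- apply: uniq_allpairs => //; first by move=> x; exact: iota_uniq.
  by move=> a1 a2 k1 k2 _ _ _ _ /rcons_inj [-> ->].
- move=> a; apply/idP/idP.
  + move=> /allpairsPdep [a' [k [ha hk ->]]].
    rewrite ca_rcons -IH ha /=; move: hk; rewrite mem_rng => /andP [h1 h2].
    apply/and3P; split => //; slia.
  + move=> ca; have : size a = m.+1 by move: ca => /and3P [/eqP].
    case/lastP: a ca => [//|a' k] ca _.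
    move: ca; rewrite ca_rcons => /and4P [ca' k0 km kl].
    apply/allpairsPdep; exists a', k; split => //; first by rewrite IH.
    rewrite mem_rng; apply/andP; split => //; slia.
Qed.

Lemma TC_stats m : map snd (T m) = map (last 0) (C m).
Proof.
elim: m => [//|m IH] /=.
rewrite !map_allpairs.
have e1 : [seq (dec x.1 x.2 k, k).2 | x <- T m, k <- rng x.2 m.+1]
        = [seq k | j <- map snd (T m), k <- rng j m.+1] by rewrite allpairs_mapl.
have e2 : [seq last 0 (rcons a k) | a <- C m, k <- rng (last 0 a) m.+1]
        = [seq k | j <- map (last 0) (C m), k <- rng j m.+1].
  rewrite allpairs_mapl; apply: eq_allpairs => a k; exact: last_rcons.
by rewrite e1 e2 IH.
Qed.

Lemma sigmaC n : sigma n = size (C n).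
Proof.
rewrite /sigma cardE.
set S := [set t : n.-tuple 'I_n.+1 | counter_array n (map (@nat_of_ord _) t)].
have [uC HC] := C_spec n.
rewrite -(size_map (fun t : n.-tuple 'I_n.+1 => map (@nat_of_ord _) t)).
apply: perm_size; apply: uniq_perm => //.
  rewrite map_inj_uniq ?enum_uniq // => t1 t2 /(inj_map val_inj) e.
  by apply: val_inj.
move=> a; rewrite HC; apply/mapP/idP.
- by case=> t; rewrite mem_enum inE => h ->.
- move=> ca.
  have sa : size a = n by move: ca => /and3P [/eqP].
  have bnd : forall z, z \in a -> z < n.+1.
    move=> z za; move: ca => /and3P [_ /allP H _].
    have i0 : index z a < n by rewrite -sa index_mem.
    have := H (index z a); rewrite mem_iota add0n i0 => /(_ isT); rewrite nth_index // => /andP [_ hz].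
    slia.
  have st : size (map (fun z => inord z : 'I_n.+1) a) == n by rewrite size_map sa.
  exists (Tuple st).
  + rewrite mem_enum inE /=.
    have -> : map (@nat_of_ord _) (map (fun z => inord z : 'I_n.+1) a) = a.
      rewrite -map_comp -[RHS]map_id; apply/eq_in_map => z za /=; exact: inordK (bnd z za).
    exact: ca.
  + rewrite /= -map_comp -[LHS]map_id; apply/eq_in_map => z za /=; by rewrite inordK ?bnd.
Qed.

Unset Implicit Arguments.

Theorem lemma3p2 (n : nat) : 1 <= n ->
  exists s : seq (seq gene),
    [/\ uniq s,
        (forall a : seq gene, a \in s <-> dup_tree_class n.+1 a)
      & size s = sigma n].
Proof.
move=> _.
have [uT HT] := T_spec n.
exists (map fst (T n)); split.
- rewrite map_inj_in_uniq // => [[b1 j1] [b2 j2]] /HT [_ _ t1] /HT [_ _ t2] /= eb.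
  by rewrite -eb in t2 *; rewrite (stat_uniq t1 t2).
- move=> a; split.
  + by case/mapP => [[b j]] /HT [Ra sa _] /= ->.
  + case=> Ra sa; have [j sj] := stat_ex a.
    by apply/mapP; exists (a, j) => //; apply/HT.
- by rewrite size_map sigmaC -(size_map snd) TC_stats size_map.
Qed.
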